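(* Let $a,A$ be real numbers with $a+3>0$ and $$\frac{a+3}{2}=\frac{2}{A+3},$$ and let $b_1,\dots,b_N$, $B_1,\dots,B_N$ be real numbers with $$\sqrt{\frac{2}{a+3}}(b_n+3)=\sqrt{\frac{2}{A+3}}(B_n+3)\qquad(n=1,\dots,N).$$ Let $\eta,\mathcal{E},\lambda_1,\dots,\lambda_N$ be real, let $l,\ell$ be real with $l+\frac12=\frac{2}{A+3}\left(\ell+\frac12\right)$, and set $$E=-\eta\left(\frac{2}{A+3}\right)^2,\quad \xi=-\mathcal{E}\left(\frac{2}{A+3}\right)^2,\quad \mu_n=\left(\frac{2}{A+3}\right)^2\lambda_n .$$ If $u\in C^2((0,\infty))$ satisfies the radial equation of $U(r)=\xi r^{a+1}+\sum_{n=1}^N\mu_n r^{b_n+1}$, $$u''(r)+\left[E-\frac{l(l+1)}{r^2}-\xi r^{a+1}-\sum_{n=1}^N\mu_n r^{b_n+1}\right]u(r)=0,$$ then $v(\rho)=\rho^{-(A+1)/4}u\!\left(\rho^{(A+3)/2}\right)$ (coordinates $r=\rho^{(A+3)/2}$, $u(r)=\rho^{(A+1)/4}v(\rho)$) satisfies the radial equation of $V(\rho)=\eta\rho^{A+1}+\sum_{n=1}^N\lambda_n\rho^{B_n+1}$: $$v''(\rho)+\left[\mathcal{E}-\frac{\ell(\ell+1)}{\rho^2}-\eta\rho^{A+1}-\sum_{n=1}^N\lambda_n\rho^{B_n+1}\right]v(\rho)=0 .$$ In this sense $U$ and $V$ are quantum Newtonianly dual, bound-state eigenfunctions of $U$ (energy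 $E$, angular quantum number $l$) being transformed into eigenfunctions of $V$ (energy $\mathcal{E}$, angular quantum number $\ell$).
   Context: Three-dimensional radial equation (units $\hbar=2m=1$): $u''+\left[E-\frac{l(l+1)}{r^2}-W(r)\right]u=0$ for a central potential $W$, with $u(r)=rR(r)$. ''General polynomial potentials'' are finite linear combinations of powers $r^{c}$ with arbitrary real exponents $c$. *)

(* Defs.v *)
From Stdlib Require Import Reals.
From Coquelicot Require Import Coquelicot.
Open Scope R_scope.

(* sumN N f = f 0 + f 1 + ... + f (N-1)  (indices n = 1..N of the paper shifted to 0..N-1) *)
Fixpoint sumN (N : nat) (f : nat -> R) : R :=
  match N with
  | O => 0
  | S k => sumN k f + f k
  end.

Definition C2_pos (f : R -> R) : Prop :=
  forall r, 0 < r ->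
    ex_derive f r /\ ex_derive (Derive f) r /\ continuous (Derive_n f 2) r.

(* Main.v *)
Require Import Defs.
From Stdlib Require Import Reals Lra Lia.
From Coquelicot Require Import Coquelicot.
Open Scope R_scope.

Lemma Ppos c x : 0 < Rpower x c.
Proof. unfold Rpower; apply exp_pos. Qed.

Lemma dP c x : 0 < x -> is_derive (fun y => Rpower y c) x (c * Rpower x (c-1)).
Proof. intros h; apply is_derive_Reals, derivable_pt_lim_power, h. Qed.

Lemma cP c x : 0 < x -> continuous (fun y => Rpower y c) x.
Proof. intros h; apply (ex_derive_continuous (K:=R_AbsRing) (V:=R_NormedModule)); eexists; apply dP, h. Qed.

Lemma is_derive_eq (f : R -> R) (x l1 l2 : R) : is_derive f x l1 -> l1 = l2 -> is_derive f x l2.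
Proof. intros H ->; exact H. Qed.

Lemma dmul (f g : R -> R) x df dg : is_derive f x df -> is_derive g x dg ->
  is_derive (fun y => f y * g y) x (df * g x + f x * dg).
Proof. intros H1 H2. exact (is_derive_mult f g x df dg H1 H2 Rmult_comm). Qed.

Lemma dcomp (f g : R -> R) x df dg : is_derive f (g x) df -> is_derive g x dg ->
  is_derive (fun y => f (g y)) x (df * dg).
Proof. intros H1 H2. eapply is_derive_eq. exact (is_derive_comp f g x df dg H1 H2).
 simpl. unfold scal; simpl. unfold mult; simpl. cbv beta; ring. Qed.

Lemma cmul (f g : R -> R) x : continuous f x -> continuous g x -> continuous (fun y => f y * g y) x.
Proof. intros; apply (continuous_mult f g); auto. Qed.

Lemma cplus (f g : R -> R) x : continuous f x -> continuous g x -> continuous (fun y => f y + g y) x.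
Proof. intros; apply (continuous_plus f g); auto. Qed.

Lemma ccomp (f g : R -> R) x : continuous g x -> continuous f (g x) -> continuous (fun y => f (g y)) x.
Proof. intros; apply (continuous_comp g f); auto. Qed.

Lemma cconst (c : R) (x:R) : continuous (fun _ : R => c) x.
Proof. apply (continuous_const (U:=R_UniformSpace) (V:=R_UniformSpace)). Qed.

Lemma loc_pos x : 0 < x -> locally x (fun y => 0 < y).
Proof. intros h. exists (mkposreal x h). intros y Hy. simpl in Hy.
 unfold ball in Hy; simpl in Hy; unfold AbsRing_ball, abs, minus, plus, opp in Hy; simpl in Hy.
 apply Rabs_def2 in Hy. lra. Qed.

Lemma dplus (f g : R -> R) x df dg : is_derive f x df -> is_derive g x dg ->
  is_derive (fun y => f y + g y) x (df + dg).
Proof. intros H1 H2. exact (is_derive_plus f g x df dg H1 H2). Qed.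

Lemma dconst (c x : R) : is_derive (fun _ => c) x 0.
Proof. apply (is_derive_const (K:=R_AbsRing) (V:=R_NormedModule)). Qed.

Lemma dcP (f : R -> R) p x df : 0 < x -> is_derive f (Rpower x p) df ->
  is_derive (fun y => f (Rpower y p)) x (df * (p * Rpower x (p-1))).
Proof. intros h H. apply (dcomp f (fun y => Rpower y p)); auto. apply dP, h. Qed.

Lemma cuP (f : R -> R) p x : 0 < x -> continuous f (Rpower x p) ->
  continuous (fun y => f (Rpower y p)) x.
Proof. intros h H. apply (ccomp f (fun y => Rpower y p)); auto. apply cP, h. Qed.

Lemma dercont (f : R -> R) x : ex_derive f x -> continuous f x.
Proof. apply (ex_derive_continuous (K:=R_AbsRing) (V:=R_NormedModule)). Qed.

Lemma second (q p : R) (u : R -> R) (hu : C2_pos u) :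
  let v := fun x => Rpower x q * u (Rpower x p) in
  C2_pos v /\ forall x, 0 < x -> Derive_n v 2 x =
   q*((q-1)*Rpower x (q-1-1)) * u (Rpower x p) + q*Rpower x (q-1) * (Derive u (Rpower x p) * (p*Rpower x (p-1)))
 + ( q*Rpower x (q-1) * (Derive u (Rpower x p) * (p*Rpower x (p-1)))
   + Rpower x q * ( Derive (Derive u) (Rpower x p) * (p*Rpower x (p-1)) * (p*Rpower x (p-1)) + Derive u (Rpower x p) * (p*((p-1)*Rpower x (p-1-1))) ) ).
Proof.
  intros v.
  set (w := fun x => q*Rpower x (q-1) * u (Rpower x p) + Rpower x q * (Derive u (Rpower x p) * (p*Rpower x (p-1)))).
  set (w' := fun x => q*((q-1)*Rpower x (q-1-1)) * u (Rpower x p) + q*Rpower x (q-1) * (Derive u (Rpower x p) * (p*Rpower x (p-1)))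
 + ( q*Rpower x (q-1) * (Derive u (Rpower x p) * (p*Rpower x (p-1)))
   + Rpower x q * ( Derive (Derive u) (Rpower x p) * (p*Rpower x (p-1)) * (p*Rpower x (p-1)) + Derive u (Rpower x p) * (p*((p-1)*Rpower x (p-1-1))) ) )).
  assert (H1 : forall x, 0 < x -> is_derive v x (w x)).
  { intros x hx. destruct (hu (Rpower x p) (Ppos _ _)) as [d1 [d2 c2]].
    unfold v, w. eapply is_derive_eq. apply dmul. apply dP, hx. apply dcP; auto. apply Derive_correct, d1. cbv beta; ring. }
  assert (H2 : forall x, 0 < x -> is_derive w x (w' x)).
  { intros x hx. destruct (hu (Rpower x p) (Ppos _ _)) as [d1 [d2 c2]].
    unfold w, w'. eapply is_derive_eq. apply dplus.
    - apply dmul. eapply is_derive_eq. apply dmul. apply dconst. apply dP, hx. reflexivity.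
      apply dcP; auto. apply Derive_correct, d1.
    - apply dmul. apply dP, hx. apply dmul. apply dcP; auto. apply Derive_correct, d2.
      eapply is_derive_eq. apply dmul. apply dconst. apply dP, hx. reflexivity.
    - cbv beta; ring. }
  assert (H3 : forall x, 0 < x -> Derive_n v 2 x = w' x).
  { intros x hx. simpl. rewrite (Derive_ext_loc (Derive v) w).
    apply is_derive_unique, H2, hx.
    eapply filter_imp; [| apply loc_pos, hx]. intros y hy. apply is_derive_unique, H1, hy. }
  split; [| exact H3].
  intros x hx. split; [| split].
  - eexists; apply H1, hx.
  - exists (w' x). eapply is_derive_ext_loc; [| apply H2, hx].
    eapply filter_imp; [| apply loc_pos, hx]. intros y hy. symmetry; apply is_derive_unique, H1, hy.
  - eapply continuous_ext_loc.
    { eapply filter_imp; [| apply loc_pos, hx]. intros y hy. symmetry; apply H3, hy. }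
    destruct (hu (Rpower x p) (Ppos _ _)) as [d1 [d2 c2]].
    unfold w'.
    Ltac cont hx c2 := match goal with
      | |- continuous (fun y => @?f y + @?g y) _ => apply (cplus f g); cont hx c2
      | |- continuous (fun y => @?f y * @?g y) _ => apply (cmul f g); cont hx c2
      | |- continuous (fun y => Rpower y _) _ => apply cP, hx
      | |- continuous (fun y => ?h (Rpower y ?p)) _ => apply (cuP h p); [exact hx | first [exact c2 | apply dercont; assumption]]
      | |- continuous (fun y => _) _ => apply cconst
      end.
    cont hx c2.
Qed.


Lemma L1 x c : 0 < x -> Rpower x (c - 1) = Rpower x c / x.
Proof. intros h. unfold Rminus. rewrite Rpower_plus, Rpower_Ropp, Rpower_1 by exact h. reflexivity. Qed.

Lemma sumN_scal N (f g : nat -> R) c :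
  (forall n, (n < N)%nat -> c * f n = g n) -> c * sumN N f = sumN N g.
Proof. induction N; intros H; simpl. ring.
  rewrite <- IHN by (intros; apply H; lia). rewrite <- H by lia. ring. Qed.

Theorem mainTheorem5
  (a A : R) (N : nat) (b B lam : nat -> R)
  (eta calE l ell : R) (u : R -> R)
  (ha : 0 < a + 3)
  (haA : (a + 3) / 2 = 2 / (A + 3))
  (hbB : forall n, (n < N)%nat ->
           sqrt (2 / (a + 3)) * (b n + 3) = sqrt (2 / (A + 3)) * (B n + 3))
  (hl : l + 1/2 = 2 / (A + 3) * (ell + 1/2))
  (hu : C2_pos u)
  (hequ : forall r, 0 < r ->
     Derive_n u 2 r
     + ((- eta * (2 / (A + 3)) ^ 2) - l * (l + 1) / r ^ 2
        - (- calE * (2 / (A + 3)) ^ 2) * Rpower r (a + 1)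
        - sumN N (fun n => ((2 / (A + 3)) ^ 2 * lam n) * Rpower r (b n + 1)))
       * u r = 0) :
  let v := fun rho => Rpower rho (- (A + 1) / 4) * u (Rpower rho ((A + 3) / 2)) in
  C2_pos v /\
  (forall rho, 0 < rho ->
     Derive_n v 2 rho
     + (calE - ell * (ell + 1) / rho ^ 2
        - eta * Rpower rho (A + 1)
        - sumN N (fun n => lam n * Rpower rho (B n + 1)))
       * v rho = 0).
Proof.
  intros v.
  destruct (second (- (A + 1) / 4) ((A + 3) / 2) u hu) as [C D].
  split; [exact C|].
  intros rho hr.
  assert (hA : 0 < A + 3).
  { destruct (Rtotal_order (A+3) 0) as [h|[h|h]]; auto.
    - assert (2 / (A+3) < 0). { unfold Rdiv. assert (/ (A+3) < 0) by (apply Rinv_lt_0_compat; lra). nra. } lra.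
    - rewrite h in haA. unfold Rdiv in haA. rewrite Rinv_0 in haA. lra. }
  set (p := (A + 3) / 2) in *.
  set (q := - (A + 1) / 4) in *.
  assert (hp : 2 / (a + 3) = p).
  { assert (H4 : (a+3)*(A+3) = 4).
    { replace ((a+3)*(A+3)) with (((a+3)/2) * (A+3) * 2) by field. rewrite haA. field. lra. }
    assert (H5 : A+3 = 4/(a+3)).
    { apply Rmult_eq_reg_l with (a+3); [rewrite H4; field; lra | lra]. }
    unfold p. rewrite H5. field. lra. }
  assert (hp0 : 0 < p) by (unfold p; lra).
  assert (hpB : forall n, (n < N)%nat -> p * (b n + 3) = B n + 3).
  { intros n hn. specialize (hbB n hn). rewrite hp in hbB.
    replace (2 / (A+3)) with (/ p) in hbB by (unfold p; field; lra).
    rewrite sqrt_inv in hbB.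
    assert (hs := sqrt_lt_R0 p hp0). assert (hss := sqrt_sqrt p (Rlt_le _ _ hp0)).
    apply (Rmult_eq_compat_l (sqrt p)) in hbB.
    rewrite <- Rmult_assoc, hss in hbB. rewrite hbB. field. lra. }
  rewrite D by exact hr.
  unfold v.
  set (X := Rpower rho p).
  assert (hX : 0 < X) by apply Ppos.
  assert (E2 := hequ X hX).
  change (Derive (Derive u) X) with (Derive_n u 2 X).
  set (S1 := sumN N (fun n => ((2 / (A + 3)) ^ 2 * lam n) * Rpower X (b n + 1))) in *.
  set (S2 := sumN N (fun n => lam n * Rpower rho (B n + 1))).
  assert (HS : p^2 * X^2 / rho^2 * S1 = S2).
  { unfold S1, S2. apply sumN_scal. intros n hn.
    replace (B n + 1) with (((p * (b n + 1) + p) + p) - 1 - 1) by (assert (hh := hpB n hn); lra).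
    rewrite !L1 by exact hr. rewrite (Rpower_plus (p * (b n + 1) + p) p), (Rpower_plus (p * (b n + 1)) p). unfold X. rewrite Rpower_mult. fold X. unfold p. field. split; lra. }

  assert (Ha : Rpower X (a + 1) = rho ^ 2 / X ^ 2).
  { unfold X. rewrite Rpower_mult.
    replace (p * (a + 1)) with (2 + - p + - p).
    rewrite !Rpower_plus, !Rpower_Ropp. fold X.
    replace 2 with (INR 2) by (simpl; ring). rewrite Rpower_pow by exact hr. field. lra.
    rewrite <- hp. field. lra. }
  assert (HA : Rpower rho (A + 1) = X ^ 2 / rho ^ 2).
  { replace (A + 1) with ((p + p) - 1 - 1) by (unfold p; field).
    rewrite !L1, Rpower_plus by exact hr. fold X. field. lra. }
  rewrite Ha in E2. rewrite HA. rewrite <- HS.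
  replace (q - 1 - 1) with (q - 1 - 1) by reflexivity.
  rewrite !L1 by exact hr. fold X.
  assert (U2 : Derive_n u 2 X = - ((- eta * (2 / (A + 3)) ^ 2) - l * (l + 1) / X ^ 2
        - (- calE * (2 / (A + 3)) ^ 2) * (rho ^ 2 / X ^ 2) - S1) * u X) by lra.
  rewrite U2.
  replace l with (2 / (A + 3) * (ell + 1/2) - 1/2) by lra.
  unfold p, q. field. repeat split; lra.
Qed.
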